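(* Let $X$ be a connected finite rack. There exists $N$ (depending on $X$) such that for every integer $n\ge N$ and every $(x_1,\dots,x_n)\in X^n$ such that $x_1,\dots,x_n$ generate $X$, the image $H$ in $S_n$ of the stabilizer $\operatorname{Stab}(x_1,\dots,x_n)\le B_n$ under the homomorphism $B_n\to S_n$ is either $A_n$ or $S_n$. If moreover $X$ is a quandle, then $H=S_n$.
   Context: A rack is a set $X$ with a binary operation $(x,y)\mapsto x^y$ such that for each $y$ the map $x\mapsto x^y$ is a bijection of $X$, and $(z^x)^y=(z^y)^{x^y}$ for all $x,y,z$. It is a quandle if moreover $x^x=x$ for all $x$. A subset $X_0\subseteq X$ is a subrack if $x^y\in X_0$ for all $x,y\in X_0$; elements $x_1,\dots,x_n$ generate $X$ if no proper subrack contains them. A finite rack is connected if the directed graph with vertex set $X$ and edges $(x,x^y)$ for $(x,y)\in X\times X$ is connected. The braid group $B_n$ is generated by $\sigma_1,\dots,\sigma_{n-1}$ with relations $\sigma_i\sigma_j=\sigma_j\sigma_i$ for $|i-j|>1$ and $\sigma_i\sigma_{i+1}\sigma_i=\sigma_{i+1}\sigma_i\sigma_{i+1}$; it acts on $X^n$ from the right by $(c_1,\dots,c_i,c_{i+1},\dots,c_n)^{\sigma_i}=(c_1,\dots,c_{i+1},c_i^{c_{i+1}},\dots,c_n)$. The homomorphism $B_n\to S_n$ sends $\sigma_i$ to the transposition $(i\ i+1)$. *)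

(* Defs.v *)
From mathcomp Require Import all_boot all_fingroup all_solvable alt.
Set Implicit Arguments.
Unset Strict Implicit.
Unset Printing Implicit Defensive.

(* A finite set X is a finType T, with binary operation op x y = x^y. *)
Section Rack.
Variable T : finType.
Variable op : T -> T -> T.

Definition is_rack : Prop :=
  (forall y, bijective (fun x => op x y)) /\
  (forall x y z, op (op z x) y = op (op z y) (op x y)).

Definition is_quandle : Prop := is_rack /\ forall x, op x x = x.

(* the inverse of x |-> x^y (meaningful when it is a bijection) *)
Definition rinv (y x : T) : T := odflt x [pick z | op z y == x].

Definition subrack (X0 : {set T}) : Prop :=
  forall x y, x \in X0 -> y \in X0 -> op x y \in X0.

Definition generates (xs : seq T) : Prop :=
  forall X0 : {set T}, subrack X0 -> (forall x, x \in xs -> x \in X0) ->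
    X0 = [set: T].

Definition rack_edge : rel T :=
  fun a b => [exists y, op a y == b] || [exists y, op b y == a].

Definition rack_connected : Prop := forall a b : T, connect rack_edge a b.

(* Braid words: (i, true) is sigma_{i+1}, (i, false) its inverse;
   positions are 0-based, so sigma_{i+1} acts on entries i and i+1. *)
Definition braid_word := seq (nat * bool).

Definition valid_word (n : nat) (w : braid_word) : bool :=
  all (fun p => p.1.+1 < n) w.

Definition gen_act (p : nat * bool) (s : seq T) : seq T :=
  let i := p.1 in
  match drop i s with
  | a :: b :: rest =>
      if p.2 then take i s ++ b :: op a b :: rest
      else take i s ++ rinv a b :: a :: rest
  | _ => s
  end.

Definition word_act (w : braid_word) (s : seq T) : seq T :=
  foldl (fun s p => gen_act p s) s w.

End Rack.

(* transposition (i i+1) on positions, and image of a word in S_n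
   (evaluated on a point, with mathcomp's convention (s*t) k = t (s k)) *)
Definition swapn (i k : nat) : nat :=
  if k == i then i.+1 else if k == i.+1 then i else k.

Definition word_perm (w : braid_word) (k : nat) : nat :=
  foldl (fun k p => swapn p.1 k) k w.

Definition in_stab_image (T : finType) (op : T -> T -> T) (n : nat)
    (xs : seq T) (s : 'S_n) : Prop :=
  exists w : braid_word, valid_word n w /\ word_act op w xs = xs /\
    forall k : 'I_n, (s k : nat) = word_perm w k.

(* Main.v *)
Require Import Defs.
From mathcomp Require Import all_boot all_fingroup all_solvable alt.
From mathcomp Require Import zify.
From Stdlib Require Import Classical.
Set Implicit Arguments. Unset Strict Implicit. Unset Printing Implicit Defensive.

Definition mvL (i m : nat) : braid_word := [seq (k, true) | k <- rev (iota i m)].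
Definition mvR (i m : nat) : braid_word := [seq (k, false) | k <- iota i m].
Definition mvRc (i m : nat) : braid_word := [seq (k, true) | k <- iota i m].

Section RackLemmas.
Variable T : finType.
Variable op : T -> T -> T.
Hypothesis Hr : is_rack op.

Lemma op_inj y : injective (fun x => op x y).
Proof. by case: (Hr.1 y) => g H _; apply: can_inj H. Qed.
Lemma op_surj y x : exists z, op z y = x.
Proof. by case: (Hr.1 y) => g H1 H2; exists (g x); exact: H2. Qed.
Lemma rinvK y x : op (rinv op y x) y = x.
Proof.
rewrite /rinv; case: pickP => [z /eqP //|H].
by case: (op_surj y x) => z Hz; move: (H z); rewrite Hz eqxx.
Qed.
Lemma opK y z : rinv op y (op z y) = z.
Proof. by apply: (@op_inj y (rinv op y (op z y)) z); rewrite /= rinvK. Qed.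
Lemma rack_ax x y z : op (op z x) y = op (op z y) (op x y).
Proof. exact: Hr.2. Qed.

Lemma gen_actT A x y C :
  gen_act op (size A, true) (A ++ x :: y :: C) = A ++ y :: op x y :: C.
Proof. by rewrite /gen_act /= drop_size_cat // take_size_cat. Qed.
Lemma gen_actF A x y C :
  gen_act op (size A, false) (A ++ x :: y :: C) = A ++ rinv op x y :: x :: C.
Proof. by rewrite /gen_act /= drop_size_cat // take_size_cat. Qed.

Lemma word_act_cons p w s : word_act op (p :: w) s = word_act op w (gen_act op p s).
Proof. by []. Qed.
Lemma word_act_cat w1 w2 s : word_act op (w1 ++ w2) s = word_act op w2 (word_act op w1 s).
Proof. by rewrite /word_act foldl_cat. Qed.

Lemma size_gen_act p s : size (gen_act op p s) = size s.
Proof.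
case: p => i bb; rewrite /gen_act /=; case E: (drop i s) => [|a [|b r]] //.
by rewrite -[in RHS](cat_take_drop i s) E; case: bb; rewrite !size_cat.
Qed.
Lemma size_word_act w s : size (word_act op w s) = size s.
Proof. by elim: w s => //= p w IH s; rewrite IH size_gen_act. Qed.

Lemma act_mvL A B y C :
  word_act op (mvL (size A) (size B)) (A ++ B ++ y :: C) = A ++ y :: map (op^~ y) B ++ C.
Proof.
elim/last_ind: B C => [|B b IH] C; first by [].
rewrite size_rcons -addn1 /mvL iotaD rev_cat /= -/(mvL _ _).
rewrite cat_rcons catA -size_cat gen_actT -catA IH.
by rewrite map_rcons cat_rcons.
Qed.

Lemma act_mvR A y B C :
  word_act op (mvR (size A) (size B)) (A ++ y :: B ++ C) = A ++ map (rinv op y) B ++ y :: C.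
Proof.
elim: B A => [|b B IH] A; first by [].
rewrite /= /mvR /= -/(mvR _ _) gen_actF.
have -> : (size A).+1 = size (rcons A (rinv op y b)) by rewrite size_rcons.
by rewrite -cat_rcons IH cat_rcons.
Qed.

Lemma act_mvRc A y B C :
  word_act op (mvRc (size A) (size B)) (A ++ y :: B ++ C) = A ++ B ++ foldl op y B :: C.
Proof.
elim: B A y => [|b B IH] A y; first by [].
rewrite /= /mvRc /= -/(mvRc _ _) gen_actT.
have -> : (size A).+1 = size (rcons A b) by rewrite size_rcons.
by rewrite -cat_rcons IH cat_rcons.
Qed.

End RackLemmas.

Lemma swapnK i k : swapn i (swapn i k) = k.
Proof.
by rewrite /swapn; do ! case: eqP; lia.
Qed.

Lemma word_perm_fst w k : word_perm w k = foldl (fun k i => swapn i k) k (map fst w).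
Proof. by elim: w k => //= p w IH k; rewrite IH. Qed.

Lemma word_perm_cat w1 w2 k : word_perm (w1 ++ w2) k = word_perm w2 (word_perm w1 k).
Proof. by rewrite /word_perm foldl_cat. Qed.

Lemma foldl_swap_revK (L : seq nat) k :
  foldl (fun k i => swapn i k) (foldl (fun k i => swapn i k) k (rev L)) L = k.
Proof.
elim: L k => //= i L IH k.
by rewrite rev_cons -cats1 foldl_cat /= swapnK IH.
Qed.

Lemma map_fst_mvL i m : map fst (mvL i m) = rev (iota i m).
Proof. by rewrite /mvL -map_comp map_id. Qed.
Lemma map_fst_mvR i m : map fst (mvR i m) = iota i m.
Proof. by rewrite /mvR -map_comp map_id. Qed.
Lemma map_fst_mvRc i m : map fst (mvRc i m) = iota i m.
Proof. by rewrite /mvRc -map_comp map_id. Qed.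

Lemma swapn_out i k : k != i -> k != i.+1 -> swapn i k = k.
Proof. by rewrite /swapn => /negbTE -> /negbTE ->. Qed.

Lemma foldl_iota_out i m k : (k < i) || (i + m < k) ->
  foldl (fun k i => swapn i k) k (iota i m) = k.
Proof.
elim: m i => //= m IH i H.
by rewrite swapn_out; [apply: IH| |]; lia.
Qed.

Lemma foldl_iota_first i m : foldl (fun k i => swapn i k) i (iota i m) = i + m.
Proof.
elim: m i => [|m IH] i /=; first by rewrite addn0.
by rewrite /swapn eqxx IH addSnnS.
Qed.

Lemma foldl_riota_out i m k : (k < i) || (i + m < k) ->
  foldl (fun k i => swapn i k) k (rev (iota i m)) = k.
Proof.
elim: m k => [|m IH] k H; first by [].
by rewrite -addn1 iotaD rev_cat /= swapn_out; [apply: IH| |]; lia.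
Qed.

Lemma foldl_riota_last i m : foldl (fun k i => swapn i k) (i + m) (rev (iota i m)) = i.
Proof.
elim: m => [|m IH]; first by rewrite addn0.
rewrite -addn1 iotaD rev_cat /= /swapn.
have -> : (i + (m + 1) == i + m) = false by lia.
by have -> : (i + (m + 1) == (i + m).+1) by lia.
Qed.

Lemma perm_mvR_first i m : word_perm (mvR i m) i = i + m.
Proof. by rewrite word_perm_fst map_fst_mvR foldl_iota_first. Qed.
Lemma perm_mvR_out i m k : (k < i) || (i + m < k) -> word_perm (mvR i m) k = k.
Proof. by move=> H; rewrite word_perm_fst map_fst_mvR foldl_iota_out. Qed.
Lemma perm_mvL_last i m : word_perm (mvL i m) (i + m) = i.
Proof. by rewrite word_perm_fst map_fst_mvL foldl_riota_last. Qed.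
Lemma perm_mvL_out i m k : (k < i) || (i + m < k) -> word_perm (mvL i m) k = k.
Proof. by move=> H; rewrite word_perm_fst map_fst_mvL foldl_riota_out. Qed.

Lemma valid_cat n w1 w2 : valid_word n (w1 ++ w2) = valid_word n w1 && valid_word n w2.
Proof. by rewrite /valid_word all_cat. Qed.

Lemma valid_iota n i m (b : bool) : i + m < n -> valid_word n [seq (k, b) | k <- iota i m].
Proof.
move=> H; apply/allP=> p /mapP [k]; rewrite mem_iota => /andP [_ Hk] -> /=.
lia.
Qed.
Lemma valid_mvR n i m : i + m < n -> valid_word n (mvR i m).
Proof. exact: valid_iota. Qed.
Lemma valid_mvRc n i m : i + m < n -> valid_word n (mvRc i m).
Proof. exact: valid_iota. Qed.
Lemma valid_mvL n i m : i + m < n -> valid_word n (mvL i m).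
Proof.
move=> H; apply/allP=> p /mapP [k]; rewrite mem_rev mem_iota => /andP [_ Hk] -> /=.
lia.
Qed.

Import GroupScope.

Section Perms.
Variable n : nat.

Definition sw (i : nat) : 'S_n :=
  match @insub _ (fun k => k < n) 'I_n i, @insub _ (fun k => k < n) 'I_n i.+1 with
  | Some a, Some b => tperm a b
  | _, _ => 1
  end.

Lemma sw_val i (k : 'I_n) : i.+1 < n -> (sw i k : nat) = swapn i k.
Proof.
move=> Hi; rewrite /sw.
case: insubP => [a _ Ea|/negP H]; last by exfalso; apply: H; lia.
case: insubP => [b _ Eb|/negP H]; last by exfalso; apply: H; lia.
rewrite /swapn; case: tpermP => [->|->|H1 H2].
- by rewrite Ea eqxx Eb.
- by rewrite Eb Ea; do ! case: eqP; lia.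
- have Hk1 : (k : nat) != i by apply/eqP=> E; apply: H1; apply: val_inj; rewrite /= Ea.
  have Hk2 : (k : nat) != i.+1 by apply/eqP=> E; apply: H2; apply: val_inj; rewrite /= Eb.
  by rewrite (negbTE Hk1) (negbTE Hk2).
Qed.

Lemma sw_inv i : (sw i)^-1 = sw i.
Proof.
rewrite /sw; case: (@insub _ (fun k => k < n) 'I_n i) => [a|]; last by rewrite invg1.
by case: (@insub _ (fun k => k < n) 'I_n i.+1) => [b|]; rewrite ?tpermV ?invg1.
Qed.

Definition Pw (w : braid_word) : 'S_n := \prod_(p <- w) sw p.1.

Lemma Pw_val w (k : 'I_n) : valid_word n w -> (Pw w k : nat) = word_perm w k.
Proof.
elim: w k => [|p w IH] k /=; first by rewrite /Pw big_nil perm1.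
case/andP=> Hp Hw; rewrite /Pw big_cons permM -/(Pw w) IH //.
by rewrite sw_val.
Qed.

Lemma Pw_cat w1 w2 : Pw (w1 ++ w2) = Pw w1 * Pw w2.
Proof. by rewrite /Pw big_cat. Qed.

Definition winv (w : braid_word) : braid_word := rev [seq (p.1, ~~ p.2) | p <- w].

Lemma Pw_winv w : Pw (winv w) = (Pw w)^-1.
Proof.
elim: w => [|p w IH]; first by rewrite /Pw /winv /= !big_nil invg1.
rewrite /winv /= rev_cons -cats1 Pw_cat -/(winv w) IH /Pw !big_cons !big_nil mulg1 /=.
by rewrite invMg sw_inv.
Qed.

Lemma valid_winv w : valid_word n (winv w) = valid_word n w.
Proof. by rewrite /valid_word /winv all_rev all_map. Qed.

Lemma stabE (T : finType) (op : T -> T -> T) xs s :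
  in_stab_image op xs s <->
  exists w, [/\ valid_word n w, word_act op w xs = xs & s = Pw w].
Proof.
split=> [[w [Hv [Ha Hp]]]|[w [Hv Ha ->]]].
  by exists w; split=> //; apply/permP=> k; apply: val_inj; rewrite /= Hp Pw_val.
by exists w; split=> //; split=> // k; rewrite Pw_val.
Qed.

Section Stab.
Variable T : finType.
Variable op : T -> T -> T.
Hypothesis Hr : is_rack op.

Lemma gen_act_inv p s : p.1.+1 < size s -> gen_act op (p.1, ~~ p.2) (gen_act op p s) = s.
Proof.
case: p => i b /= H.
have Hs : size (take i s) = i by rewrite size_take; case: ltnP => //; lia.
have : size (drop i s) > 1 by rewrite size_drop; lia.
move: (cat_take_drop i s) Hs; set A := take i s.
case: (drop i s) => [|x [|y C]] //= E Hs _.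
rewrite -E -Hs; case: b => /=.
- by rewrite gen_actT gen_actF opK.
- by rewrite gen_actF gen_actT rinvK.
Qed.

Lemma act_winv w s : valid_word (size s) w -> word_act op (winv w) (word_act op w s) = s.
Proof.
elim: w s => [|p w IH] s //= /andP [Hp Hw].
rewrite /winv /= rev_cons -cats1 -/(winv w) word_act_cat IH ?size_gen_act //=.
exact: gen_act_inv.
Qed.

Lemma stab1 xs : @in_stab_image T op n xs 1.
Proof. by apply/stabE; exists [::]; split=> //; rewrite /Pw big_nil. Qed.

Lemma stabM xs (s t : 'S_n) : in_stab_image op xs s -> in_stab_image op xs t ->
  in_stab_image op xs (s * t).
Proof.
move=> /stabE [w1 [H1 A1 ->]] /stabE [w2 [H2 A2 ->]]; apply/stabE.
exists (w1 ++ w2); split; first by rewrite valid_cat H1 H2.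
  by rewrite word_act_cat A1 A2.
by rewrite Pw_cat.
Qed.

Lemma stab_conj w xs (s : 'S_n) : size xs = n -> valid_word n w ->
  in_stab_image op (word_act op w xs) s -> in_stab_image op xs (Pw w * s * (Pw w)^-1).
Proof.
move=> Hn Hv /stabE [u [Hu Au ->]]; apply/stabE.
exists (w ++ u ++ winv w); split.
- by rewrite !valid_cat Hv Hu valid_winv Hv.
- by rewrite !word_act_cat Au act_winv // Hn.
- by rewrite !Pw_cat Pw_winv mulgA.
Qed.

End Stab.
End Perms.

Definition c3 (T : finType) (a b c : T) : {perm T} := tperm a b * tperm b c.

Lemma c3J (T : finType) (a b c : T) g : (c3 a b c) ^ g = c3 (g a) (g b) (g c).
Proof. by rewrite /c3 conjMg !tpermJ. Qed.

Definition W (i : nat) : braid_word :=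
  [:: (i,true); (i.+1,false); (i,true); (i,true); (i.+1,true); (i,false); (i,false); (i.+1,false)].

Lemma sw_tperm n (a b : 'I_n) : val b = (val a).+1 -> sw n a = tperm a b.
Proof.
move=> Hb; rewrite /sw insubT ?ltn_ord // => Ha.
rewrite insubT -?Hb ?ltn_ord // => Hb'.
by congr tperm; apply: val_inj.
Qed.

Section RackD.
Variable T : finType.
Variable op : T -> T -> T.
Hypothesis Hr : is_rack op.

Lemma gen_actT1 A x y z C :
  gen_act op ((size A).+1, true) (A ++ x :: y :: z :: C) = A ++ x :: z :: op y z :: C.
Proof. by rewrite -(size_rcons A x) -cat_rcons gen_actT cat_rcons. Qed.
Lemma gen_actF1 A x y z C :
  gen_act op ((size A).+1, false) (A ++ x :: y :: z :: C) = A ++ x :: rinv op y z :: y :: C.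
Proof. by rewrite -(size_rcons A x) -cat_rcons gen_actF cat_rcons. Qed.

Lemma Rsq a z : op z (op a a) = op z a.
Proof.
case: (op_surj Hr a z) => w <-.
by rewrite -rack_ax.
Qed.

Lemma Rinv a z : op z (rinv op a a) = op z a.
Proof.
apply: (@op_inj _ _ Hr a (op z (rinv op a a)) (op z a)) => /=.
by rewrite rack_ax // rinvK.
Qed.

Lemma act_W A a C :
  word_act op (W (size A)) (A ++ [:: a; a; a] ++ C) = A ++ [:: a; a; a] ++ C.
Proof.
set b := op a a; set a' := rinv op a a.
have E1 : rinv op b a = a'.
  apply: (@op_inj _ _ Hr a) => /=; rewrite -{1}(Rsq a) rinvK //.
  by rewrite /a' rinvK.
have E2 : op a a' = b by rewrite /a' Rinv.
have E3 : op a' b = a by rewrite /b Rsq /a' rinvK.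
have E4 : op a b = b by rewrite /b Rsq.
have E5 : rinv op b b = a by rewrite -{2}E4 opK.
have E6 : rinv op a b = a by rewrite /b opK.
rewrite /W /= gen_actT gen_actF1 E1 gen_actT E2 gen_actT E3 gen_actT1 E4.
by rewrite gen_actF E5 gen_actF E6 gen_actF1 E6.
Qed.

Lemma swKr n (y : 'S_n) j : y * sw n j * sw n j = y.
Proof. by rewrite -mulgA -{1}(sw_inv n j) mulVg mulg1. Qed.

Lemma Pw_W n i : Pw n (W i) = sw n i * sw n i.+1.
Proof.
rewrite /Pw /W !big_cons big_nil mulg1 /=.
by rewrite !mulgA !swKr.
Qed.


Lemma stab_W n A a C : size A + 2 < n -> size (A ++ [:: a;a;a] ++ C) = n ->
  in_stab_image op (A ++ [:: a;a;a] ++ C) (sw n (size A) * sw n (size A).+1).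
Proof.
move=> Hi Hn; apply/stabE; exists (W (size A)); split.
- rewrite /valid_word /W /=; lia.
- exact: act_W.
- by rewrite Pw_W.
Qed.

Lemma conj_c3 n (P : 'S_n) a b c a0 b0 c0 :
  P a0 = a -> P b0 = b -> P c0 = c -> P * c3 a b c * P^-1 = c3 a0 b0 c0.
Proof.
move=> Ea Eb Ec.
have -> : P * c3 a b c * P^-1 = (c3 a b c) ^ P^-1.
  rewrite conjgE invgK; symmetry; exact: mulgA.
by rewrite c3J -Ea -Eb -Ec !permK.
Qed.

Lemma E3 n A B C D v (a b c : 'I_n) :
  size (A ++ v :: B ++ v :: C ++ v :: D) = n ->
  val a = size A -> val b = size A + size B + 1 -> val c = size A + size B + size C + 2 ->
  in_stab_image op (A ++ v :: B ++ v :: C ++ v :: D) (c3 a b c).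
Proof.
move=> Hn Ha Hb Hc.
have Hn' : size A + size B + size C + size D + 3 = n.
  by move: Hn; rewrite !size_cat /= !size_cat /= !size_cat /=; lia.
set z := A ++ _.
set w1 := mvL (size A + size B + 2) (size C).
set w2 := mvR (size A) (size B).
have Hv : valid_word n (w1 ++ w2).
  by rewrite valid_cat valid_mvL ?valid_mvR //; lia.
have Hz : word_act op (w1 ++ w2) z =
    (A ++ map (rinv op v) B) ++ [:: v; v; v] ++ (map (op^~ v) C ++ D).
  rewrite word_act_cat /w1 /w2.
  have -> : z = (A ++ v :: B ++ [:: v]) ++ C ++ v :: D by rewrite /z -!catA /= -!catA.
  have -> : size A + size B + 2 = size (A ++ v :: B ++ [:: v]).
    by rewrite size_cat /= size_cat /=; lia.
  rewrite act_mvL.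
  have -> : (A ++ v :: B ++ [:: v]) ++ v :: map (op^~ v) C ++ D =
      A ++ v :: B ++ (v :: v :: map (op^~ v) C ++ D) by rewrite -!catA /= -!catA.
  by rewrite act_mvR -catA.
have Hb1 : size A + size B < n by lia.
have Hc1 : size A + size B + 2 < n by lia.
pose b' := Ordinal Hb1; pose c' := Ordinal Hc1.
have Hst : in_stab_image op (word_act op (w1 ++ w2) z) (c3 b' b c').
  rewrite Hz /c3.
  have Hs : size (A ++ map (rinv op v) B) = size A + size B by rewrite size_cat size_map.
  rewrite -(@sw_tperm n b' b) /=; last by rewrite Hb; lia.
  rewrite -(@sw_tperm n b c') /=; last by rewrite Hb; lia.
  rewrite Hb -Hs addn1.
  apply: stab_W; first by rewrite Hs; lia.
  by rewrite !size_cat /= ?size_map ?size_cat; lia.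
have := stab_conj Hr Hn Hv Hst.
rewrite (@conj_c3 n _ b' b c' a b c) //.
- apply: val_inj; rewrite /= Pw_val // word_perm_cat Ha perm_mvL_out; last by lia.
  by rewrite perm_mvR_first.
- apply: val_inj; rewrite /= Pw_val // word_perm_cat Hb perm_mvL_out; last by lia.
  by rewrite perm_mvR_out //; lia.
- apply: val_inj; rewrite /= Pw_val // word_perm_cat Hc.
  have -> : size A + size B + size C + 2 = size A + size B + 2 + size C by lia.
  by rewrite perm_mvL_last perm_mvR_out //=; lia.
Qed.

Lemma Q2 n A v C : is_quandle op -> size (A ++ v :: v :: C) = n ->
  in_stab_image op (A ++ v :: v :: C) (sw n (size A)).
Proof.
move=> [_ Hq] Hn; apply/stabE; exists [:: (size A, true)]; split.
- rewrite /valid_word /= andbT; move: Hn; rewrite size_cat /=; lia.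
- by rewrite /= gen_actT Hq.
- by rewrite /Pw big_cons big_nil mulg1.
Qed.

End RackD.

Section GT.
Variable n : nat.
Variable Hs : 'S_n -> Prop.
Hypothesis H1 : Hs 1.
Hypothesis HM : forall a b, Hs a -> Hs b -> Hs (a * b).
Variables r1 r2 : 'I_n.
Hypothesis r12 : r1 != r2.
Hypothesis Htau : forall x, x != r1 -> x != r2 -> Hs (c3 r1 r2 x).

Lemma Hexp a k : Hs a -> Hs (a ^+ k).
Proof. by move=> Ha; elim: k => [|k IH]; rewrite ?expg0 ?expgS //; apply: HM. Qed.

Lemma Hinv a : Hs a -> Hs a^-1.
Proof.
move=> Ha.
have -> : a^-1 = a ^+ #[a].-1.
  have E : a * a ^+ #[a].-1 = 1 by rewrite -expgS prednK ?order_gt0 // expg_order.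
  by rewrite -[a^-1]mulg1 -E mulKg.
exact: Hexp.
Qed.

Lemma Hvv a b : a != r2 -> b != r2 -> Hs (tperm r2 a * tperm r2 b).
Proof.
move=> Ha Hb.
case: (eqVneq a b) => [->|Hab]; first by rewrite tperm2.
case: (eqVneq a r1) => [Ea|Ha1].
  by rewrite Ea tpermC; apply: Htau => //; rewrite -Ea eq_sym.
case: (eqVneq b r1) => [Eb|Hb1].
  have := Hinv (Htau Ha1 Ha); rewrite /c3 invMg !tpermV Eb.
  by rewrite [tperm r1 r2]tpermC.
have := HM (Hinv (Htau Ha1 Ha)) (Htau Hb1 Hb).
by rewrite /c3 invMg !tpermV -mulgA (mulgA (tperm r1 r2)) tperm2 mul1g.
Qed.

Lemma Hlist (L : seq 'I_n) : all (fun a => a != r2) L -> ~~ odd (size L) ->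
  Hs (\prod_(a <- L) tperm r2 a).
Proof.
move: {2}(size L) (leqnn (size L)) => m; elim: m L => [|m IH] [|a [|b L]] //=;
  rewrite ?big_nil //.
move=> Hsz /and3P [Ha Hb HL] Hodd.
rewrite !big_cons mulgA; apply: HM; first exact: Hvv.
by apply: IH => //; [lia | move: Hodd; rewrite negbK].
Qed.

Definition fl (t : 'I_n * 'I_n) : seq 'I_n :=
  if t.1 == r2 then [:: t.2] else if t.2 == r2 then [:: t.1] else [:: t.1; t.2; t.1].

Lemma fl_ok t : t.1 != t.2 ->
  [/\ tperm t.1 t.2 = \prod_(a <- fl t) tperm r2 a, all (fun a => a != r2) (fl t)
    & odd (size (fl t))].
Proof.
case: t => x y /= Hxy; rewrite /fl /=.
case: (eqVneq x r2) => [Ex|Hx] /=.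
  by rewrite big_seq1 /= andbT -Ex eq_sym.
case: (eqVneq y r2) => [Ey|Hy] /=.
  by rewrite big_seq1 Hx -Ey tpermC.
rewrite !big_cons big_nil mulg1 Hx Hy; split=> //.
have -> : tperm r2 x * (tperm r2 y * tperm r2 x) = (tperm r2 y) ^ (tperm r2 x).
  by rewrite conjgE tpermV.
by rewrite tpermJ tpermL tpermD // eq_sym.
Qed.

Lemma GT (s : 'S_n) : ~~ odd_perm s -> Hs s.
Proof.
case: (prod_tpermP s) => ts -> Hts.
rewrite odd_perm_prod // => Hodd.
have [L [EL AL OL]] : exists L : seq 'I_n,
    [/\ \prod_(t <- ts) tperm t.1 t.2 = \prod_(a <- L) tperm r2 a,
        all (fun a => a != r2) L & odd (size L) = odd (size ts)].
  elim: ts Hts {Hodd} => [|t ts IH] /=; first by exists [::]; rewrite !big_nil.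
  case/andP=> Ht /IH [L [EL AL OL]].
  case: (fl_ok Ht) => E1 A1 O1.
  exists (fl t ++ L); split.
  - by rewrite big_cons big_cat /= EL E1.
  - by rewrite all_cat A1 AL.
  - by rewrite size_cat oddD O1 OL.
by rewrite EL; apply: Hlist => //; rewrite OL.
Qed.

End GT.

Section Reach.
Variable T : finType.
Variable op : T -> T -> T.
Hypothesis Hr : is_rack op.

Definition K0 := #|[set: {perm T}]|.

Lemma K0_gt0 : 0 < K0.
Proof. by rewrite /K0 (cardD1 1) inE. Qed.

Lemma iterK0 v y : iter K0 (fun x => op x v) y = y.
Proof.
pose p : {perm T} := perm (@op_inj _ _ Hr v).
have E : forall k x, iter k (fun x => op x v) x = (p ^+ k) x.
  by move=> k x; rewrite permX; apply: eq_iter => z; rewrite permE.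
by rewrite E /K0 expg_cardG ?inE // perm1.
Qed.

Lemma foldl_nseq k v y : foldl op y (nseq k v) = iter k (fun x => op x v) y.
Proof. by elim: k y => // k IH y; rewrite iterSr -IH. Qed.

Variable Y : seq T.
Definition RE (a b : T) := has (fun y => op a y == b) Y.
Definition Reach := connect RE.

Lemma reach_iter y a k : y \in Y -> Reach a (iter k (fun x => op x y) a).
Proof.
move=> Hy; elim: k => [|k IH] /=; first exact: connect0.
apply: connect_trans IH (connect1 _).
by apply/hasP; exists y.
Qed.

Lemma reach_back a y : y \in Y -> Reach (op a y) a.
Proof.
move=> Hy.
have := reach_iter (op a y) K0.-1 Hy.
by rewrite -iterSr prednK ?K0_gt0 // iterK0.
Qed.

Lemma reach_sym a b : Reach a b -> Reach b a.
Proof.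
move/connectP=> [p Hp ->]; elim: p a Hp => [|c p IH] a /=; first by move=> _; exact: connect0.
case/andP=> /hasP [y Hy /eqP Ec] Hp.
apply: connect_trans (IH _ Hp) _.
by rewrite -Ec; apply: reach_back.
Qed.

Hypothesis HY : generates op Y.

Lemma reach_op a z : Reach a (op a z).
Proof.
pose Z := [set z | [forall a, Reach a (op a z)]].
suff : z \in Z by rewrite inE => /forallP.
have -> : Z = [set: T]; last by rewrite inE.
apply: HY.
- move=> z1 z2; rewrite !inE => /forallP H1 /forallP H2; apply/forallP=> a0.
  set w := rinv op z2 a0.
  have Ea : op w z2 = a0 by rewrite rinvK.
  have -> : op a0 (op z1 z2) = op (op w z1) z2 by rewrite rack_ax // Ea.
  apply: connect_trans (H2 _).
  apply: connect_trans (H1 w).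
  by apply: reach_sym; rewrite -[X in Reach _ X]Ea.
- move=> y Hy; rewrite inE; apply/forallP=> a0.
  by apply: connect1; apply/hasP; exists y.
Qed.

Lemma reach_all a b : rack_connected op -> Reach a b.
Proof.
move=> Hc; move/connectP: (Hc a b) => [p Hp ->]; elim: p a Hp => [|c p IH] a /=.
  by move=> _; exact: connect0.
case/andP=> He Hp; apply: connect_trans (IH _ Hp).
case/orP: He => /existsP [y /eqP <-]; first exact: reach_op.
by apply: reach_sym; apply: reach_op.
Qed.

End Reach.

Section RunTrick.
Variable T : finType.
Variable op : T -> T -> T.
Hypothesis Hr : is_rack op.
Variable K : nat.
Hypothesis HK : forall v y, iter K (fun x => op x v) y = y.

Lemma RT1 w Y1 y Y2 : exists g,
  [/\ valid_word (K + size (Y1 ++ y :: Y2)) g,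
      word_act op g (nseq K w ++ Y1 ++ y :: Y2) = nseq K (op w y) ++ Y1 ++ y :: Y2
    & forall k, word_perm g k = k].
Proof.
exists (mvL 0 (K + size Y1) ++ mvRc 0 K ++ mvR K (size Y1)); split.
- rewrite !valid_cat valid_mvL ?valid_mvRc ?valid_mvR //; rewrite size_cat /=; lia.
- have S1 : word_act op (mvL 0 (K + size Y1)) (nseq K w ++ Y1 ++ y :: Y2) =
      y :: nseq K (op w y) ++ map (fun x => op x y) Y1 ++ Y2.
    have := @act_mvL _ op [::] (nseq K w ++ Y1) y Y2.
    by rewrite /= size_cat size_nseq -catA map_cat map_nseq -catA.
  have S2 : word_act op (mvRc 0 K) (y :: nseq K (op w y) ++ map (fun x => op x y) Y1 ++ Y2) =
      nseq K (op w y) ++ y :: map (fun x => op x y) Y1 ++ Y2.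
    have := @act_mvRc _ op [::] y (nseq K (op w y)) (map (fun x => op x y) Y1 ++ Y2).
    by rewrite /= size_nseq foldl_nseq HK.
  have S3 : word_act op (mvR K (size Y1)) (nseq K (op w y) ++ y :: map (fun x => op x y) Y1 ++ Y2)
      = nseq K (op w y) ++ Y1 ++ y :: Y2.
    have := @act_mvR _ op (nseq K (op w y)) y (map (fun x => op x y) Y1) Y2.
    rewrite size_nseq size_map -map_comp => ->.
    by congr (_ ++ _ ++ _); rewrite -[RHS]map_id; apply: eq_map => x /=; rewrite opK.
  by rewrite !word_act_cat S1 S2 S3.
- move=> k; rewrite word_perm_fst !map_cat map_fst_mvL map_fst_mvRc map_fst_mvR.
  by rewrite -iotaD foldl_cat foldl_swap_revK.
Qed.

End RunTrick.

Lemma c3_rot (T : finType) (a b c : T) : a != b -> b != c -> a != c -> c3 a b c = c3 b c a.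
Proof.
move=> Hab Hbc Hac; rewrite /c3.
have E : tperm a b = tperm b c * tperm c a * tperm b c.
  have -> : tperm b c * tperm c a * tperm b c = (tperm c a) ^ (tperm b c).
    by rewrite conjgE tpermV mulgA.
  by rewrite tpermJ tpermR tpermD 1?eq_sym //; exact: tpermC.
by rewrite E -!mulgA tperm2 mulg1.
Qed.

Lemma split_first (T : eqType) (c : T) S : c \in S ->
  exists B C, S = B ++ c :: C /\ count_mem c B = 0.
Proof.
elim: S => // x S IH; rewrite inE; case: (eqVneq c x) => [->|Hcx] /= H.
  by exists [::], S.
case: (IH H) => B [C [-> HB]]; exists (x :: B), C; split=> //=.
by rewrite HB eq_sym (negbTE Hcx).
Qed.

Lemma pigeon (T : finType) (s : seq T) K : #|T| * K < size s -> exists c, K < count_mem c s.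
Proof.
move=> H; case: (boolP [exists c, K < count_mem c s]) => [/existsP //|/existsPn Hn].
exfalso; move: H; rewrite ltnNge; apply/negP/negPn.
have -> : size s = \sum_(c : T) count_mem c s.
  elim: s {Hn} => [|x s IH] /=; first by rewrite big1.
  rewrite big_split /= -IH.
  rewrite (bigD1 x) //= eqxx big1 // => y Hy; by rewrite eq_sym (negbTE Hy).
rewrite -sum_nat_const; apply: leq_sum => c _.
by have := Hn c; rewrite -leqNgt.
Qed.

Lemma nseq_rcons (T : Type) m (c : T) : rcons (nseq m c) c = nseq m.+1 c.
Proof. by elim: m => //= m ->. Qed.

Section G.
Variable T : finType.
Variable op : T -> T -> T.
Hypothesis Hr : is_rack op.

Lemma gather c r : forall m S, r <= count_mem c S -> exists g,
  valid_word (m + size S) g /\ exists S', word_act op g (nseq m c ++ S) = nseq (m + r) c ++ S'.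
Proof.
elim: r => [|r IH] m S H.
  by exists [::]; split=> //; exists S; rewrite addn0.
have : c \in S by rewrite -has_pred1 has_count; lia.
case/split_first => B [C [ES HB]].
have H2 : r <= count_mem c (map (fun x => op x c) B ++ C).
  by move: H; rewrite ES count_cat count_cat /= HB eqxx; lia.
case: (IH m.+1 _ H2) => g [Hg [S' ES']].
exists (mvL m (size B) ++ g); split.
  rewrite valid_cat valid_mvL; last by rewrite ES size_cat /=; lia.
  rewrite ES; have -> : m + size (B ++ c :: C) = m.+1 + size (map (fun x => op x c) B ++ C) by rewrite !size_cat size_map /=; lia.
  exact: Hg.
exists S'; rewrite word_act_cat ES.
have := @act_mvL _ op (nseq m c) B c C; rewrite size_nseq => ->.
by rewrite -cat_rcons nseq_rcons ES' addSnnS.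
Qed.

Lemma subrack_inv (X0 : {set T}) a b : subrack op X0 -> b \in X0 -> op a b \in X0 -> a \in X0.
Proof.
move=> HX Hb Hab.
have Hinj : injective (fun x => op x b) by apply: op_inj.
have Hsub : (fun x => op x b) @: X0 \subset X0.
  by apply/subsetP=> y /imsetP [x Hx ->] /=; apply: HX.
have E : (fun x => op x b) @: X0 = X0.
  by apply/eqP; rewrite eqEcard Hsub (card_imset _ Hinj) leqnn.
move: Hab; rewrite -{1}E => /imsetP [x Hx /Hinj ->] //.
Qed.

Lemma gen_gen_act p s : generates op s -> generates op (gen_act op p s).
Proof.
move=> Hg X0 HX Hin; apply: Hg => // x Hx.
case: p Hin => i bb; rewrite /gen_act /=.
case E: (drop i s) => [|a [|b r]] Hin; try by apply: Hin.
move: Hx; rewrite -(cat_take_drop i s) E mem_cat !inE => Hx.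
case: bb Hin => Hin.
- have Hb : b \in X0 by apply: Hin; rewrite mem_cat !inE eqxx orbT.
  have Hab : op a b \in X0 by apply: Hin; rewrite mem_cat !inE eqxx !orbT.
  case/orP: Hx => [Hx|/or3P [/eqP ->|/eqP ->|Hx]].
  + by apply: Hin; rewrite mem_cat Hx.
  + exact: subrack_inv Hb Hab.
  + exact: Hb.
  + by apply: Hin; rewrite mem_cat !inE Hx !orbT.
- have Ha : a \in X0 by apply: Hin; rewrite mem_cat !inE eqxx !orbT.
  have Hra : rinv op a b \in X0 by apply: Hin; rewrite mem_cat !inE eqxx orbT.
  case/orP: Hx => [Hx|/or3P [/eqP ->|/eqP ->|Hx]].
  + by apply: Hin; rewrite mem_cat Hx.
  + exact: Ha.
  + by rewrite -(rinvK Hr a b); apply: HX.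
  + by apply: Hin; rewrite mem_cat !inE Hx !orbT.
Qed.

Lemma gen_word_act w s : generates op s -> generates op (word_act op w s).
Proof. by elim: w s => //= p w IH s H; apply: IH; apply: gen_gen_act. Qed.

Variable K : nat.
Hypothesis HK : forall v y, iter K (fun x => op x v) y = y.
Variable Y : seq T.

Lemma RTn w t : Reach op Y w t -> exists g,
  [/\ valid_word (K + size Y) g, word_act op g (nseq K w ++ Y) = nseq K t ++ Y
    & forall k, word_perm g k = k].
Proof.
move/connectP=> [p Hp ->]; elim: p w Hp => [|x p IH] w /=.
  by move=> _; exists [::].
case/andP=> /hasP [y Hy /eqP Ex] Hp.
case: (IH _ Hp) => g [Hg Ag Pg].
case/splitPr: Hy Hg Ag => Y1 Y2 Hg Ag.
case: (RT1 Hr HK w Y1 y Y2) => g1 [Hg1 Ag1 Pg1].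
exists (g1 ++ g); split.
- by rewrite valid_cat Hg1 Hg.
- by rewrite word_act_cat Ag1 Ex.
- by move=> k; rewrite word_perm_cat Pg1 Pg.
Qed.

End G.

Close Scope group_scope.

Theorem theorem2p4 (T : finType) (op : T -> T -> T) :
  is_rack op -> rack_connected op ->
  exists N : nat, forall n : nat, N <= n ->
    forall xs : seq T, size xs = n -> generates op xs ->
      ((forall s : 'S_n, in_stab_image op xs s <-> s \in ('Alt_('I_n))%g) \/
       (forall s : 'S_n, in_stab_image op xs s)) /\
      (is_quandle op -> forall s : 'S_n, in_stab_image op xs s).
Proof.
move=> Hr Hc.
pose K := (K0 T).*2.
have HK : forall v y, iter K (fun x => op x v) y = y.
  by move=> v y; rewrite /K -addnn iterD !(iterK0 Hr).
have K2 : 2 <= K by rewrite /K -addnn; have := K0_gt0 T; lia.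
exists (#|T| * K.+1).+1 => n HN xs Hsz Hgen.
have [c Hc1] : exists c, K < count_mem c xs by apply: pigeon; lia.
have HT : 0 < #|T| by apply/card_gt0P; exists c.
have Hn2 : K.+1 < n by move: HN; rewrite -Hsz; nia.
have [g [Hg [S' Ez0]]] := @gather _ op c K.+1 0 xs Hc1.
rewrite /= add0n Hsz in Hg Ez0.
pose z0 := nseq K.+1 c ++ S'.
have {}Ez0 : word_act op g xs = z0 := Ez0.
have Hz0n : size z0 = n by rewrite -Ez0 size_word_act.
have Hgen0 : generates op z0 by rewrite -Ez0; apply: gen_word_act.
have transfer : forall s : 'S_n, in_stab_image op z0 (s ^ Pw n g)%g -> in_stab_image op xs s.
  move=> s H; have := stab_conj Hr Hsz Hg (s := (s ^ Pw n g)%g); rewrite Ez0 => /(_ H).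
  by rewrite conjgE mulKVg mulgK.
have hr1 : K.-2 < n by lia.
have hr2 : K.-1 < n by lia.
pose r1 : 'I_n := Ordinal hr1.
pose r2 : 'I_n := Ordinal hr2.
have r12 : r1 != r2 by apply/eqP => /(congr1 val) /=; lia.
have Htau : forall x : 'I_n, x != r1 -> x != r2 -> in_stab_image op z0 (c3 r1 r2 x).
  move=> x Hx1 Hx2.
  have Hx1' : (x : nat) != K.-2 by apply/eqP => E; move/eqP: Hx1; apply; apply: val_inj.
  have Hx2' : (x : nat) != K.-1 by apply/eqP => E; move/eqP: Hx2; apply; apply: val_inj.
  case: (ltnP x K.-2) => Hxlt.
  - pose m := K.-2 - x.+1.
    have Ez : z0 = nseq x c ++ c :: nseq m c ++ c :: [::] ++ c :: (c :: S').
      rewrite /z0; have -> : K.+1 = x + (1 + (m + 3)) by rewrite /m; lia.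
      by rewrite !nseqD -!catA.
    have H3 : in_stab_image op z0 (c3 x r1 r2).
      rewrite Ez; apply: (E3 Hr); rewrite -?Ez //= ?size_nseq //; rewrite /m; lia.
    by rewrite c3_rot in H3.
  - have HxK : K <= x by lia.
    pose l := x - K.
    pose Y := c :: S'.
    have EzY : z0 = nseq K c ++ Y by rewrite /z0 /Y -cat_rcons nseq_rcons.
    have HYn : K + size Y = n by rewrite -Hz0n EzY size_cat size_nseq.
    have Hl : l < size Y by rewrite /l; have := ltn_ord x; lia.
    pose t := nth c Y l.
    have HY : generates op Y.
      move=> X0 HX HYX; apply: Hgen0 => // y; rewrite EzY mem_cat => /orP [|]; last exact: HYX.
      by rewrite mem_nseq => /andP [_ /eqP ->]; apply: HYX; rewrite inE eqxx.
    have Rct : Reach op Y c t by apply: (reach_all Hr HY).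
    have [ga [Hga Aga Pga]] := RTn Hr HK Rct.
    have EY : Y = take l Y ++ t :: drop l.+1 Y by rewrite /t -drop_nth // cat_take_drop.
    have Ez1 : nseq K t ++ Y = nseq K.-2 t ++ t :: [::] ++ t :: take l Y ++ t :: drop l.+1 Y.
      have E2 : nseq K t = nseq K.-2 t ++ nseq 2 t by rewrite -nseqD; congr nseq; lia.
      by rewrite {1}EY E2 -catA.
    have H3 : in_stab_image op (nseq K t ++ Y) (c3 r1 r2 x).
      rewrite Ez1; apply: (E3 Hr); rewrite -?Ez1 ?size_cat ?size_nseq /= ?size_take ?Hl //; lia.
    have Hgan : valid_word n ga by rewrite -HYn.
    have := stab_conj Hr Hz0n Hgan (s := c3 r1 r2 x); rewrite EzY Aga => /(_ H3).
    have -> : Pw n ga = 1%g.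
      by apply/permP => k; apply: val_inj; rewrite /= Pw_val // Pga perm1.
    by rewrite mul1g invg1 mulg1.
have Alt0 : forall s : 'S_n, ~~ odd_perm s -> in_stab_image op z0 s.
  exact: (GT (stab1 n op z0) (@stabM n T op z0) r12 Htau).
have AltX : forall s : 'S_n, ~~ odd_perm s -> in_stab_image op xs s.
  by move=> s Hs; apply: transfer; apply: Alt0; rewrite odd_permJ.
have finish : (exists t : 'S_n, in_stab_image op xs t /\ odd_perm t) ->
    forall s : 'S_n, in_stab_image op xs s.
  move=> [t [Ht Hto]] s.
  case: (boolP (odd_perm s)) => Hs; last exact: AltX.
  have -> : s = ((s * t^-1) * t)%g by rewrite mulgKV.
  apply: stabM => //; apply: AltX.
  by rewrite odd_permM odd_permV Hs Hto.
split.
- case: (classic (exists t : 'S_n, in_stab_image op xs t /\ odd_perm t)) => [Hex|Hno].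
    by right; apply: finish.
  left=> s; split=> [Hs|].
    by rewrite Alt_even; apply/negP => Ho; apply: Hno; exists s.
  by rewrite Alt_even; exact: AltX.
- move=> Hq; apply: finish.
  have h0 : 0 < n by lia.
  have h1 : 1 < n by lia.
  pose a0 : 'I_n := Ordinal h0.
  pose a1 : 'I_n := Ordinal h1.
  exists ((tperm a0 a1) ^ (Pw n g)^-1)%g; split; last first.
    by rewrite odd_permJ odd_tperm.
  apply: transfer; rewrite conjgKV.
  have Ez : z0 = [::] ++ c :: c :: (nseq K.-1 c ++ S').
    by rewrite /z0 /=; have -> : K = K.-1.+1 by lia.
  rewrite -(@sw_tperm n a0 a1) //.
  have := @Q2 T op n [::] c (nseq K.-1 c ++ S') Hq.
  by rewrite -Ez => /(_ Hz0n).
Qed.
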